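(* Let $C\subseteq\mathbb R^d$ be a full-dimensional pointed cone, let $\Gamma$ be the set of points of $C$ lying outside some (possibly empty) truncation of $C$, let $V$ be a countable subset of $C$, and set $U=V+\Gamma$. Then the boundary $\partial U=\overline U\setminus U^\circ$ has Lebesgue measure zero.
   Context: A cone is a subset of $\mathbb R^d$ closed under nonnegative real linear combinations; full-dimensional means nonempty interior; pointed means closed and there is $\mathbf b$ with $\langle\mathbf u,\mathbf b\rangle>0$ for all nonzero $\mathbf u$ in the cone. For such $\mathbf b$ and real $\alpha\ge0$, $H=\{\mathbf u:\langle\mathbf u,\mathbf b\rangle<\alpha\}$ is a truncating halfspace and $C\cap H$ is a truncation of $C$ (empty when $\alpha=0$); $\Gamma=C\setminus H$. $V+\Gamma$ is the Minkowski sum; $\overline U$ and $U^\circ$ denote closure and interior. *)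

(* Defs.v *)
From Stdlib Require Import Reals.
From Stdlib Require Vectors.Fin.
Open Scope R_scope.

Definition Vec (d : nat) := Fin.t d -> R.

Fixpoint sumFin (n : nat) : (Fin.t n -> R) -> R :=
  match n with
  | O => fun _ => 0
  | S m => fun f => f Fin.F1 + sumFin m (fun i => f (Fin.FS i))
  end.

Fixpoint prodFin (n : nat) : (Fin.t n -> R) -> R :=
  match n with
  | O => fun _ => 1
  | S m => fun f => f Fin.F1 * prodFin m (fun i => f (Fin.FS i))
  end.

Definition vzero {d} : Vec d := fun _ => 0.
Definition vadd {d} (u v : Vec d) : Vec d := fun i => u i + v i.
Definition vscale {d} (a : R) (u : Vec d) : Vec d := fun i => a * u i.
Definition inner {d} (u v : Vec d) : R := sumFin d (fun i => u i * v i).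
Definition vnorm {d} (u : Vec d) : R := sqrt (inner u u).
Definition dist {d} (u v : Vec d) : R := vnorm (fun i => u i - v i).

Definition VSet (d : nat) := Vec d -> Prop.

Definition interior {d} (A : VSet d) : VSet d :=
  fun x => exists r, 0 < r /\ forall y, dist x y < r -> A y.
Definition closure {d} (A : VSet d) : VSet d :=
  fun x => forall r, 0 < r -> exists y, A y /\ dist x y < r.
Definition is_closed {d} (A : VSet d) : Prop := forall x, closure A x -> A x.

Definition boundary {d} (A : VSet d) : VSet d :=
  fun x => closure A x /\ ~ interior A x.

Definition is_cone {d} (C : VSet d) : Prop :=
  C vzero /\
  forall a b u v, 0 <= a -> 0 <= b -> C u -> C v -> C (vadd (vscale a u) (vscale b v)).

Definition full_dimensional {d} (C : VSet d) : Prop := exists x, interior C x.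

Definition pointing_vector {d} (C : VSet d) (b : Vec d) : Prop :=
  forall u, C u -> u <> vzero -> 0 < inner u b.

Definition pointed {d} (C : VSet d) : Prop :=
  is_closed C /\ exists b, pointing_vector C b.

Definition halfspace {d} (b : Vec d) (alpha : R) : VSet d :=
  fun u => inner u b < alpha.

Definition setminus {d} (A B : VSet d) : VSet d := fun x => A x /\ ~ B x.

Definition minkowski_sum {d} (A B : VSet d) : VSet d :=
  fun x => exists a c, A a /\ B c /\ x = vadd a c.

Definition countable_set {d} (A : VSet d) : Prop :=
  exists f : nat -> Vec d, forall x, A x -> exists n, f n = x.

Definition subset {d} (A B : VSet d) : Prop := forall x, A x -> B x.

(* Lebesgue measure zero (Lebesgue outer measure zero): for every eps > 0 the
   set is covered by countably many closed boxes (None = empty box) whose total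
   volume is at most eps. *)
Definition box_mem {d} (bx : option (Vec d * Vec d)) (x : Vec d) : Prop :=
  match bx with
  | None => False
  | Some (lo, hi) => forall i, lo i <= x i <= hi i
  end.
Definition box_vol {d} (bx : option (Vec d * Vec d)) : R :=
  match bx with
  | None => 0
  | Some (lo, hi) => prodFin d (fun i => Rmax 0 (hi i - lo i))
  end.

Definition lebesgue_null {d} (A : VSet d) : Prop :=
  forall eps, 0 < eps ->
    exists boxes : nat -> option (Vec d * Vec d),
      (forall x, A x -> exists n, box_mem (boxes n) x) /\
      (forall N, sum_f_R0 (fun n => box_vol (boxes n)) N <= eps).

(* Main.v *)
Require Import Defs.
From Stdlib Require Import Reals.
From Stdlib Require Import Lra Lia List.
From Stdlib Require FinFun Cantor ClassicalEpsilon FunctionalExtensionality Classical.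
Open Scope R_scope.
Import Defs.

Fixpoint lsum {A} (f : A -> R) (l : list A) : R :=
  match l with nil => 0 | a :: l => f a + lsum f l end.

Lemma lsum_app {A} (f : A -> R) l1 l2 : lsum f (l1 ++ l2) = lsum f l1 + lsum f l2.
Proof. induction l1; simpl; [ring| rewrite IHl1; ring]. Qed.

Lemma lsum_map {A B} (f : B -> R) (g : A -> B) l : lsum f (map g l) = lsum (fun x => f (g x)) l.
Proof. induction l; simpl; congruence. Qed.

Lemma lsum_nonneg {A} (f : A -> R) l : (forall x, 0 <= f x) -> 0 <= lsum f l.
Proof. intros H; induction l; simpl; [lra| specialize (H a); lra]. Qed.

Lemma lsum_incl {A} (f : A -> R) (l : list A) : (forall x, 0 <= f x) -> NoDup l ->
  forall l', incl l l' -> lsum f l <= lsum f l'.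
Proof.
  intros Hf Hnd. induction Hnd as [|a l Hna Hnd IH]; intros l' Hincl.
  - simpl; apply lsum_nonneg; auto.
  - assert (Ha : In a l') by (apply Hincl; simpl; auto).
    destruct (in_split _ _ Ha) as [l1 [l2 ->]].
    assert (lsum f l <= lsum f (l1 ++ l2)).
    { apply IH. intros x Hx. assert (Hx' : In x (l1 ++ a :: l2)) by (apply Hincl; simpl; auto).
      apply in_app_or in Hx'. apply in_or_app. destruct Hx' as [H|[H|H]]; auto.
      subst; contradiction. }
    rewrite !lsum_app in *. simpl. lra.
Qed.

Lemma sum_lsum (f : nat -> R) N : sum_f_R0 f N = lsum f (seq 0 (S N)).
Proof.
  induction N. { simpl. ring. }
  simpl sum_f_R0. rewrite IHN. replace (S (S N)) with (S N + 1)%nat by lia.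
  rewrite seq_app, lsum_app. simpl. ring.
Qed.

Lemma lsum_prod {A B} (g : A * B -> R) l l' :
  lsum g (list_prod l l') = lsum (fun k => lsum (fun i => g (k, i)) l') l.
Proof. induction l; simpl; [reflexivity|]. rewrite lsum_app, lsum_map, IHl. reflexivity. Qed.

Lemma lsum_ext {A} (f g : A -> R) l : (forall x, f x = g x) -> lsum f l = lsum g l.
Proof. intros H; induction l; simpl; congruence. Qed.

Lemma lsum_le {A} (f g : A -> R) l : (forall x, f x <= g x) -> lsum f l <= lsum g l.
Proof. intros H; induction l; simpl; [lra| specialize (H a); lra]. Qed.

Lemma geom_sum eps K : lsum (fun k => eps * (/2) ^ (S k)) (seq 0 (S K)) = eps - eps * (/2)^(S K).
Proof.
  rewrite <- sum_lsum. induction K; simpl; [field|].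
  simpl in IHK. rewrite IHK. field.
Qed.

Lemma bound_list (l : list (nat * nat)) : exists K, forall x, In x l -> (fst x <= K /\ snd x <= K)%nat.
Proof.
  induction l as [|[a b] l [K HK]]; [exists 0%nat; simpl; tauto|].
  exists (Nat.max K (Nat.max a b)). intros x [<-|Hx]; simpl; [lia|].
  specialize (HK x Hx); lia.
Qed.

Lemma prodFin_nonneg n (f : Fin.t n -> R) : (forall i, 0 <= f i) -> 0 <= prodFin n f.
Proof.
  revert f; induction n; intros f Hf; simpl; [lra|].
  apply Rmult_le_pos; auto.
Qed.

Lemma box_vol_nonneg {d} (bx : option (Vec d * Vec d)) : 0 <= box_vol bx.
Proof.
  destruct bx as [[lo hi]|]; simpl; [|lra].
  apply prodFin_nonneg. intro i; apply Rmax_l.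
Qed.

Lemma null_union {d} (A : VSet d) (B : nat -> VSet d) :
  (forall k, lebesgue_null (B k)) -> (forall x, A x -> exists k, B k x) -> lebesgue_null A.
Proof.
  intros HB Hcov eps Heps.
  assert (Hp : forall k, 0 < eps * (/2)^(S k)).
  { intro k. apply Rmult_lt_0_compat; auto. apply pow_lt; lra. }
  set (bx := fun k => proj1_sig (ClassicalEpsilon.constructive_indefinite_description _ (HB k _ (Hp k)))).
  assert (Hbx : forall k, (forall x, B k x -> exists n, box_mem (bx k n) x) /\
     (forall N, sum_f_R0 (fun n => box_vol (bx k n)) N <= eps * (/2)^(S k))).
  { intro k. exact (proj2_sig (ClassicalEpsilon.constructive_indefinite_description _ (HB k _ (Hp k)))). }
  exists (fun n => let '(k, i) := Cantor.of_nat n in bx k i). split.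
  - intros x Hx. destruct (Hcov x Hx) as [k Hk]. destruct (proj1 (Hbx k) x Hk) as [i Hi].
    exists (Cantor.to_nat (k, i)). rewrite Cantor.cancel_of_to. exact Hi.
  - intro N. set (g := fun p : nat * nat => box_vol (bx (fst p) (snd p))).
    assert (E : sum_f_R0 (fun n => box_vol (let '(k, i) := Cantor.of_nat n in bx k i)) N
              = lsum g (map Cantor.of_nat (seq 0 (S N)))).
    { rewrite sum_lsum, lsum_map. apply lsum_ext. intro n. unfold g.
      destruct (Cantor.of_nat n); reflexivity. }
    rewrite E.
    assert (Hg : forall x, 0 <= g x) by (intro; apply box_vol_nonneg).
    eapply Rle_trans.
    { apply (lsum_incl g _ Hg).
      - apply FinFun.Injective_map_NoDup; [|apply seq_NoDup].
        intros a b Hab. rewrite <- (Cantor.cancel_to_of a), <- (Cantor.cancel_to_of b), Hab. reflexivity.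
      - instantiate (1 := list_prod (seq 0 (S N)) (seq 0 (S N))).
        intros [x y] Hxy. apply in_map_iff in Hxy. destruct Hxy as [n [Hn Hin]].
        apply in_seq in Hin.
        pose proof (Cantor.to_nat_non_decreasing x y) as Hle.
        rewrite <- Hn, Cantor.cancel_to_of in Hle.
        apply in_prod; apply in_seq; lia. }
    rewrite lsum_prod.
    eapply Rle_trans.
    { apply lsum_le with (g := fun k => eps * (/2)^(S k)). intro k.
      unfold g; cbn beta. rewrite <- (sum_lsum (fun i => box_vol (bx (fst (k,i)) (snd (k,i))))). simpl fst; simpl snd. apply (proj2 (Hbx k)). }
    rewrite geom_sum. assert (0 < eps * (/2)^(S N)) by apply Hp. lra.
Qed.

Lemma fin_cases {n} (P : Fin.t (S n) -> Prop) : P Fin.F1 -> (forall j, P (Fin.FS j)) -> forall i, P i.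
Proof. intros H1 H2 i. apply (Fin.caseS' i P H1 H2). Qed.

Lemma fin0_empty (i : Fin.t 0) : False.
Proof. exact (Fin.case0 (fun _ => False) i). Qed.

Lemma sumFin_ext n (f g : Fin.t n -> R) : (forall i, f i = g i) -> sumFin n f = sumFin n g.
Proof. revert f g; induction n; intros f g H; simpl; [reflexivity|]. rewrite H, (IHn _ (fun i => g (Fin.FS i))); auto. Qed.

Lemma sumFin_add n (f g : Fin.t n -> R) : sumFin n (fun i => f i + g i) = sumFin n f + sumFin n g.
Proof. revert f g; induction n; intros f g; simpl; [ring|]. rewrite (IHn (fun i => f (Fin.FS i)) (fun i => g (Fin.FS i))). ring. Qed.

Lemma sumFin_zero n (f : Fin.t n -> R) : (forall i, f i = 0) -> sumFin n f = 0.
Proof. revert f; induction n; intros f H; simpl; [reflexivity|]. rewrite H, (IHn (fun i => f (Fin.FS i))); auto; ring. Qed.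

Lemma sumFin_nonneg n (f : Fin.t n -> R) : (forall i, 0 <= f i) -> 0 <= sumFin n f.
Proof. revert f; induction n; intros f H; simpl; [reflexivity|]. pose proof (IHn (fun i => f (Fin.FS i)) (fun i => H _)). rewrite (H Fin.F1). lra. Qed.

Lemma sumFin_ge_term n (f : Fin.t n -> R) : (forall i, 0 <= f i) -> forall i, f i <= sumFin n f.
Proof.
  revert f; induction n; intros f H i; [destruct (fin0_empty i)|].
  revert i; apply fin_cases; simpl.
  - pose proof (sumFin_nonneg n (fun i => f (Fin.FS i)) (fun i => H _)). lra.
  - intro j. pose proof (IHn (fun i => f (Fin.FS i)) (fun i => H _) j). specialize (H Fin.F1). simpl in *. lra.
Qed.

Lemma sumFin_le_const n (f : Fin.t n -> R) B : (forall i, f i <= B) -> sumFin n f <= INR n * B.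
Proof.
  revert f; induction n; intros f H; [simpl; lra|].
  pose proof (IHn (fun i => f (Fin.FS i)) (fun i => H _)). specialize (H Fin.F1).
  rewrite S_INR. simpl sumFin. lra.
Qed.

Lemma prodFin_le n (f g : Fin.t n -> R) h : 0 <= h -> (forall i, 0 <= f i <= h * g i) ->
  prodFin n f <= h ^ n * prodFin n g.
Proof.
  revert f g; induction n; intros f g Hh H; simpl; [lra|].
  pose proof (IHn (fun i => f (Fin.FS i)) (fun i => g (Fin.FS i)) Hh (fun i => H _)).
  pose proof (prodFin_nonneg n (fun i => f (Fin.FS i)) (fun i => proj1 (H _))).
  destruct (H Fin.F1).
  replace (h * h ^ n * (g Fin.F1 * prodFin n (fun i => g (Fin.FS i))))
    with ((h * g Fin.F1) * (h ^ n * prodFin n (fun i => g (Fin.FS i)))) by ring.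
  apply Rmult_le_compat; auto.
Qed.

Lemma norm_ge_coord {n} (w : Vec n) i : Rabs (w i) <= vnorm w.
Proof.
  unfold vnorm, inner. rewrite <- sqrt_Rsqr_abs. apply sqrt_le_1_alt.
  unfold Rsqr. apply (sumFin_ge_term n (fun i => w i * w i)). intro; nra.
Qed.

Lemma inner_le {n} (w : Vec n) M : (forall i, Rabs (w i) <= M) -> inner w w <= INR n * (M * M).
Proof.
  intro H. unfold inner. apply sumFin_le_const. intro i. specialize (H i).
  unfold Rabs in H; destruct (Rcase_abs (w i)); nra.
Qed.

Definition sball {d} (v : Vec d) (r : R) (C : VSet d) : Prop :=
  forall w, (forall i, Rabs (w i - v i) < r) -> C w.

Lemma vext {d} (u v : Vec d) : (forall i, u i = v i) -> u = v.
Proof. intro H; apply FunctionalExtensionality.functional_extensionality; exact H. Qed.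

Lemma cone_scale {d} (C : VSet d) a u : is_cone C -> 0 <= a -> C u -> C (vscale a u).
Proof.
  intros [H0 H] Ha Hu.
  replace (vscale a u) with (vadd (vscale a u) (vscale 0 vzero)).
  - apply H; auto; lra.
  - apply vext; intro i; unfold vadd, vscale, vzero; ring.
Qed.

Lemma cone_add {d} (C : VSet d) u v : is_cone C -> C u -> C v -> C (vadd u v).
Proof.
  intros [H0 H] Hu Hv.
  replace (vadd u v) with (vadd (vscale 1 u) (vscale 1 v)).
  - apply H; auto; lra.
  - apply vext; intro i; unfold vadd, vscale; ring.
Qed.

Lemma sball_scale {d} (C : VSet d) q r l : is_cone C -> sball q r C -> 0 < l ->
  sball (vscale l q) (l * r) C.
Proof.
  intros Hc Hs Hl w Hw.
  replace w with (vscale l (vscale (/ l) w)).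
  - apply cone_scale; auto; [lra|]. apply Hs. intro i. specialize (Hw i).
    unfold vscale in *.
    replace (/ l * w i - q i) with (/ l * (w i - l * q i)) by (field; lra).
    rewrite Rabs_mult, Rabs_inv, (Rabs_right l) by lra.
    apply Rmult_lt_reg_l with l; auto. field_simplify; lra.
  - apply vext; intro i; unfold vscale; field; lra.
Qed.

Lemma inner_add_l {d} (u v b : Vec d) : inner (vadd u v) b = inner u b + inner v b.
Proof.
  unfold inner, vadd. rewrite <- sumFin_add. apply sumFin_ext; intro; ring.
Qed.

Lemma inner_C_nonneg {d} (C : VSet d) b c : pointing_vector C b -> C c -> 0 <= inner c b.
Proof.
  intros Hb Hc. destruct (Classical_Prop.classic (c = vzero)) as [->|Hn].
  - unfold inner, vzero. rewrite sumFin_zero; [lra|]. intro; ring.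
  - left; apply Hb; auto.
Qed.

Lemma dist_coord {d} (x y : Vec d) i : Rabs (x i - y i) <= Defs.dist x y.
Proof. unfold Defs.dist. apply (norm_ge_coord (fun i => x i - y i)). Qed.

Section Upset.
Context {d : nat} (C : VSet d) (b : Vec d) (alpha : R) (V : VSet d)
  (hcone : is_cone C) (hb : pointing_vector C b).

Definition UU := minkowski_sum V (setminus C (halfspace b alpha)).

Lemma upset_int x v rho : closure UU x -> sball v rho C -> 0 < rho -> interior UU (vadd x v).
Proof.
  intros Hx Hv Hr.
  destruct (Hx (rho / 2)) as [y [Hy Hxy]]; [lra|].
  exists (rho / 2). split; [lra|]. intros z Hz.
  destruct Hy as [a [g [Ha [[HgC Hgb] ->]]]].
  set (c := fun i => z i - (a i + g i)).
  assert (HcC : C c).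
  { apply Hv. intro i. pose proof (dist_coord x (vadd a g) i). pose proof (dist_coord (vadd x v) z i).
    unfold c, vadd in *.
    replace (z i - (a i + g i) - v i) with (- (x i + v i - z i) + (x i - (a i + g i))) by ring.
    eapply Rle_lt_trans; [apply Rabs_triang|]. rewrite Rabs_Ropp. lra. }
  exists a, (vadd g c). split; [auto|]. split.
  - split; [apply cone_add; auto|]. unfold halfspace. rewrite inner_add_l.
    pose proof (inner_C_nonneg C b c hb HcC). unfold halfspace in Hgb. lra.
  - apply vext; intro i; unfold vadd, c; ring.
Qed.
End Upset.

Definition tpar {n} (p x : Vec (S n)) : R := x Fin.F1 / p Fin.F1.
Definition zfull {n} (p x : Vec (S n)) (i : Fin.t (S n)) : R := x i - tpar p x * p i.
Definition zc {n} (p x : Vec (S n)) (j : Fin.t n) : R := zfull p x (Fin.FS j).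

Lemma zfull_F1 {n} (p x : Vec (S n)) : p Fin.F1 <> 0 -> zfull p x Fin.F1 = 0.
Proof. intro H. unfold zfull, tpar. field. auto. Qed.

Definition CoreProp {n} (p : Vec (S n)) (D : VSet (S n)) : Prop :=
  forall x y h, D x -> D y -> 0 < h -> h <= tpar p y - tpar p x ->
    (forall j, Rabs (zc p y j - zc p x j) <= h) -> False.

Lemma core {n} (C : VSet (S n)) b alpha V p : is_cone C -> pointing_vector C b ->
  sball p 2 C -> p Fin.F1 <> 0 -> CoreProp p (boundary (UU C b alpha V)).
Proof.
  intros Hc Hb Hp Hp1 x y h [Hx _] [_ Hy] Hh Hst Hz.
  set (s := tpar p y - tpar p x).
  assert (Hs : 0 < s) by (unfold s; lra).
  assert (Hzf : forall i, Rabs (zfull p y i - zfull p x i) <= h).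
  { apply fin_cases.
    - rewrite !zfull_F1 by auto. rewrite Rminus_0_r, Rabs_R0. lra.
    - intro j. apply (Hz j). }
  apply Hy. replace y with (vadd x (fun i => y i - x i)) by (apply vext; intro; unfold vadd; ring).
  apply upset_int with (rho := s); auto.
  - intros u Hu. apply (sball_scale C p 2 s Hc Hp Hs). intro i.
    specialize (Hu i). specialize (Hzf i). unfold vscale. cbv beta in Hu.
    replace (u i - s * p i) with ((u i - (y i - x i)) + (zfull p y i - zfull p x i))
      by (unfold zfull, s; ring).
    eapply Rle_lt_trans; [apply Rabs_triang|]. unfold s in *. lra.
Qed.

Fixpoint dec (n N i : nat) {struct n} : Fin.t n -> nat :=
  match n return Fin.t n -> nat with
  | O => fun _ => 0%nat
  | S n' => fun j => Fin.caseS' j (fun _ => nat) (i mod N) (fun j' => dec n' N (i / N) j')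
  end.

Lemma dec_surj n N (a : Fin.t n -> nat) : (0 < N)%nat -> (forall j, (a j < N)%nat) ->
  exists i, (i < N ^ n)%nat /\ forall j, dec n N i j = a j.
Proof.
  revert a; induction n; intros a HN Ha.
  - exists 0%nat. split; [simpl; lia|]. intro j; destruct (fin0_empty j).
  - destruct (IHn (fun j => a (Fin.FS j)) HN (fun j => Ha _)) as [i' [Hi' Hdec]].
    exists (a Fin.F1 + i' * N)%nat. split.
    + pose proof (Ha Fin.F1). simpl. nia.
    + apply fin_cases; simpl.
      * rewrite Nat.mod_add by lia. apply Nat.mod_small. apply Ha.
      * intro j. rewrite Nat.div_add by lia. rewrite Nat.div_small by apply Ha. simpl. apply Hdec.
Qed.

Lemma cover_lemma N h u : (0 < N)%nat -> 0 < h -> 0 <= u <= INR N * h ->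
  exists a, (a < N)%nat /\ INR a * h <= u <= (INR a + 1) * h.
Proof.
  revert u; induction N; intros u HN Hh Hu; [lia|].
  destruct (Nat.eq_dec N 0) as [->|HN0].
  - exists 0%nat. simpl in *. split; [lia|]. lra.
  - destruct (Rle_dec u (INR N * h)).
    + destruct (IHN u ltac:(lia) Hh ltac:(lra)) as [a [Ha1 Ha2]]. exists a. split; [lia|auto].
    + exists N. split; [lia|]. rewrite S_INR in Hu. lra.
Qed.

Lemma sum_bound (f : nat -> R) L B : 0 <= B -> (forall k, 0 <= f k) -> (forall k, (k < L)%nat -> f k <= B) ->
  (forall k, (L <= k)%nat -> f k = 0) -> forall M, sum_f_R0 f M <= INR L * B.
Proof.
  intros HB Hf Hlt Hge.
  assert (H : forall M, sum_f_R0 f M <= INR (Nat.min (S M) L) * B).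
  { induction M.
    - simpl. destruct L; simpl.
      + rewrite Hge by lia. lra.
      + specialize (Hlt 0%nat ltac:(lia)). lra.
    - simpl sum_f_R0. destruct (Nat.lt_ge_cases (S M) L).
      + replace (Nat.min (S (S M)) L) with (S (Nat.min (S M) L)) by lia.
        rewrite S_INR. specialize (Hlt (S M) H). lra.
      + replace (Nat.min (S (S M)) L) with (Nat.min (S M) L) by lia.
        rewrite (Hge (S M)) by lia. lra. }
  intro M. eapply Rle_trans; [apply H|]. apply Rmult_le_compat_r; auto.
  apply le_INR. lia.
Qed.

Lemma Rabs_le_inv a b : Rabs a <= b -> - b <= a <= b.
Proof. unfold Rabs; destruct (Rcase_abs a); intros; lra. Qed.

Definition ext0 {n} (c : R) (f : Fin.t n -> R) (i : Fin.t (S n)) : R :=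
  Fin.caseS' i (fun _ => R) c f.

Lemma window_null {n} (p : Vec (S n)) (D : VSet (S n)) (R0 : nat) :
  p Fin.F1 <> 0 -> CoreProp p D ->
  lebesgue_null (fun x => D x /\ forall j, Rabs (zc p x j) <= INR R0).
Proof.
  intros Hp1 Hcore eps Heps.
  set (Rr := INR R0 + 1).
  assert (HRr : 0 < Rr) by (unfold Rr; pose proof (pos_INR R0); lra).
  set (Kp := prodFin (S n) (fun i => 2 * Rabs (p i) + 1)).
  assert (HKp : 0 <= Kp) by (apply prodFin_nonneg; intro; pose proof (Rabs_pos (p i)); lra).
  destruct (INR_archimed eps ((2 * Rr) ^ n * Kp) Heps) as [m0 Hm0].
  set (m := S m0).
  assert (Hm : 0 < INR m) by (apply lt_0_INR; unfold m; lia).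
  assert (Hmeps : (2 * Rr) ^ n * Kp <= INR m * eps).
  { unfold m. rewrite S_INR. lra. }
  assert (Hm' : (0 < m)%nat) by (unfold m; lia).
  clearbody m.
  set (h := / INR m).
  assert (Hh : 0 < h) by (apply Rinv_0_lt_compat; auto).
  set (N := (2 * (S R0) * m)%nat).
  assert (HN : (0 < N)%nat) by (unfold N; lia).
  assert (HNh : INR N * h = 2 * Rr).
  { unfold N, h, Rr. rewrite !mult_INR, S_INR. simpl (INR 2). rewrite !S_INR, INR_0. clear -Hm. field. lra. }
  set (cell := fun (a : Fin.t n -> nat) (x : Vec (S n)) =>
     forall j, - Rr + INR (a j) * h <= zc p x j <= - Rr + (INR (a j) + 1) * h).
  set (Tsel := fun a => ClassicalEpsilon.epsilon (inhabits 0)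
                 (fun T => exists x0, D x0 /\ cell a x0 /\ tpar p x0 = T)).
  set (zlo := fun a => ext0 (n:=n) 0 (fun j : Fin.t n => - Rr + INR (a j) * h)).
  set (zhi := fun a => ext0 (n:=n) 0 (fun j : Fin.t n => - Rr + (INR (a j) + 1) * h)).
  set (box := fun a => ((fun i => Tsel a * p i - h * Rabs (p i) + zlo a i),
                        (fun i => Tsel a * p i + h * Rabs (p i) + zhi a i))).
  exists (fun k => if Nat.ltb k (N ^ n) then Some (box (dec n N k)) else None).
  split.
  - intros x [Hx Hz].
    assert (Ha : forall j, exists a, (a < N)%nat /\ INR a * h <= zc p x j + Rr <= (INR a + 1) * h).
    { intro j. apply cover_lemma; auto. rewrite HNh. specialize (Hz j).
      unfold Rr in *. apply Rabs_le_inv in Hz. lra. }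
    set (a := fun j => proj1_sig (ClassicalEpsilon.constructive_indefinite_description _ (Ha j))).
    assert (Ha' : forall j, (a j < N)%nat /\ INR (a j) * h <= zc p x j + Rr <= (INR (a j) + 1) * h).
    { intro j. exact (proj2_sig (ClassicalEpsilon.constructive_indefinite_description _ (Ha j))). }
    destruct (dec_surj n N a HN (fun j => proj1 (Ha' j))) as [k [Hk Hdec]].
    exists k. rewrite (proj2 (Nat.ltb_lt k (N ^ n)) Hk).
    set (a' := dec n N k).
    assert (Hcx : cell a' x).
    { intro j. unfold a'. rewrite Hdec. destruct (Ha' j) as [_ H]. lra. }
    assert (HT : exists T, exists x0, D x0 /\ cell a' x0 /\ tpar p x0 = T) by (exists (tpar p x), x; auto).
    destruct (ClassicalEpsilon.epsilon_spec (inhabits 0) _ HT) as [x0 [Hx0 [Hc0 Ht0]]].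
    fold (Tsel a') in Ht0.
    assert (Hzd : forall j, Rabs (zc p x j - zc p x0 j) <= h /\ Rabs (zc p x0 j - zc p x j) <= h).
    { intro j. specialize (Hcx j). specialize (Hc0 j). split; apply Rabs_le; lra. }
    assert (Htl : Rabs (tpar p x - Tsel a') <= h).
    { apply Rabs_le. split.
      - destruct (Rle_dec (tpar p x - Tsel a') (- h)) as [Hle|Hle]; [|lra].
        exfalso. apply (Hcore x x0 h Hx Hx0 Hh); [lra|]. intro j; apply Hzd.
      - destruct (Rle_dec (tpar p x - Tsel a') h) as [Hle|Hle]; [lra|].
        exfalso. apply (Hcore x0 x h Hx0 Hx Hh); [lra|]. intro j; apply Hzd. }
    assert (Hzf : forall i, zlo a' i <= zfull p x i <= zhi a' i).
    { apply fin_cases.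
      - unfold zlo, zhi, ext0. simpl. rewrite zfull_F1 by auto. lra.
      - intro j. unfold zlo, zhi, ext0. simpl. apply Hcx. }
    simpl. intro i. specialize (Hzf i).
    assert (Hpi : Rabs (tpar p x * p i - Tsel a' * p i) <= h * Rabs (p i)).
    { rewrite <- Rmult_minus_distr_r, Rabs_mult. apply Rmult_le_compat_r; auto. apply Rabs_pos. }
    apply Rabs_le_inv in Hpi. unfold zfull in Hzf. lra.
  - intro M. eapply Rle_trans; [apply sum_bound with (L := (N ^ n)%nat) (B := h ^ (S n) * Kp)|].
    + apply Rmult_le_pos; auto. apply pow_le; lra.
    + intro; apply box_vol_nonneg.
    + intros k Hk. rewrite (proj2 (Nat.ltb_lt k (N ^ n)) Hk). unfold box_vol, box; cbv beta iota.
      apply prodFin_le; [lra|]. intro i. split; [apply Rmax_l|].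
      apply Rmax_lub; [apply Rmult_le_pos; [lra|]; pose proof (Rabs_pos (p i)); lra|].
      assert (Hw : zhi (dec n N k) i - zlo (dec n N k) i <= h).
      { revert i. apply fin_cases; intros; unfold zlo, zhi, ext0; simpl; lra. }
      simpl. lra.
    + intros k Hk. destruct (Nat.ltb_spec k (N ^ n)); [lia|]. reflexivity.
    + rewrite pow_INR. unfold N. rewrite !mult_INR. unfold h.
      replace (INR 2) with 2 by (simpl; ring). replace (INR (S R0)) with Rr by (unfold Rr; rewrite S_INR; ring).
      rewrite !Rpow_mult_distr. rewrite <- Rinv_pow by lra. simpl (_ ^ S n).
      assert (Hmn : 0 < INR m ^ n) by (apply pow_lt; lra).
      replace ((2 ^ n * Rr ^ n * INR m ^ n) * (/ (INR m * INR m ^ n) * Kp)) with ((2 * Rr) ^ n * Kp / INR m).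
      2:{ rewrite Rpow_mult_distr. field. split; lra. }
      apply Rmult_le_reg_r with (INR m); auto. unfold Rdiv. rewrite Rmult_assoc, Rinv_l by lra. lra.
Qed.

Lemma null_empty {d} (A : VSet d) : (forall x, ~ A x) -> lebesgue_null A.
Proof.
  intros H eps Heps. exists (fun _ => None). split.
  - intros x Hx; destruct (H x Hx).
  - intro M. eapply Rle_trans; [apply (sum_bound _ 0 0); try lra|].
    + intro; apply box_vol_nonneg.
    + intros; lia.
    + intros; reflexivity.
    + simpl; lra.
Qed.

Lemma exists_p {n} (C : VSet (S n)) : is_cone C -> full_dimensional C ->
  exists p, sball p 2 C /\ p Fin.F1 <> 0.
Proof.
  intros Hc [x0 [r0 [Hr0 Hball]]].
  set (k := INR (S n)).
  assert (Hk : 1 <= k) by (unfold k; rewrite S_INR; pose proof (pos_INR n); lra).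
  set (s := r0 / (k + 1)).
  assert (Hs : 0 < s) by (unfold s; apply Rdiv_lt_0_compat; lra).
  assert (Hsk : s * (k + 1) = r0) by (unfold s; field; lra).
  assert (Hsb : sball x0 s C).
  { intros w Hw. apply Hball. unfold Defs.dist, vnorm.
    assert (Hin : inner (fun i => x0 i - w i) (fun i => x0 i - w i) <= k * (s * s)).
    { apply inner_le. intro i. specialize (Hw i). rewrite Rabs_minus_sym. lra. }
    assert (Hin0 : 0 <= inner (fun i => x0 i - w i) (fun i => x0 i - w i)).
    { apply sumFin_nonneg. intro i. apply Rle_0_sqr. }
    rewrite <- (sqrt_Rsqr r0) by lra. apply sqrt_lt_1_alt. split; auto. unfold Rsqr. nra. }
  assert (Hq : exists q rho, 0 < rho /\ sball q rho C /\ q Fin.F1 <> 0).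
  { destruct (Req_dec (x0 Fin.F1) 0) as [H0|H0].
    - exists (vadd x0 (ext0 (n:=n) (s/2) (fun _ => 0))), (s/2). split; [lra|]. split.
      + intros w Hw. apply Hsb. intro i. specialize (Hw i).
        assert (He : forall i, Rabs (ext0 (n:=n) (s/2) (fun _ => 0) i) <= s/2).
        { apply fin_cases; unfold ext0; simpl; [|intro]; rewrite ?Rabs_R0, ?Rabs_right; lra. }
        specialize (He i).
        unfold vadd in Hw.
        replace (w i - x0 i) with ((w i - (x0 i + ext0 (s/2) (fun _ => 0) i)) + ext0 (s/2) (fun _ => 0) i) by ring.
        eapply Rle_lt_trans; [apply Rabs_triang|]. lra.
      + unfold vadd, ext0; simpl. lra.
    - exists x0, s. auto. }
  destruct Hq as [q [rho [Hrho [Hqb Hq1]]]].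
  exists (vscale (2 / rho) q). split.
  - replace 2 with ((2 / rho) * rho) at 2 by (field; lra).
    apply sball_scale; auto. apply Rdiv_lt_0_compat; lra.
  - unfold vscale. apply Rmult_integral_contrapositive_currified; auto.
    apply Rgt_not_eq, Rdiv_lt_0_compat; lra.
Qed.

Theorem mainTheorem12 (d : nat) (C : VSet d) (b : Vec d) (alpha : R) (V : VSet d)
  (hcone : is_cone C) (hfull : full_dimensional C) (hpointed : pointed C)
  (hb : pointing_vector C b) (halpha : 0 <= alpha)
  (hVC : subset V C) (hV : countable_set V) :
  lebesgue_null (boundary (minkowski_sum V (setminus C (halfspace b alpha)))).
Proof.
  change (lebesgue_null (boundary (UU C b alpha V))).
  destruct d as [|n].
  - apply null_empty. intros x [Hcl Hint]. destruct (Hcl 1 ltac:(lra)) as [y [Hy _]].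
    apply Hint. exists 1. split; [lra|]. intros z _.
    replace z with y; auto. apply vext; intro i; destruct (fin0_empty i).
  - destruct (exists_p C hcone hfull) as [p [Hp Hp1]].
    pose proof (core C b alpha V p hcone hb Hp Hp1) as Hcore.
    apply null_union with (B := fun R0 x => boundary (UU C b alpha V) x /\ forall j, Rabs (zc p x j) <= INR R0).
    + intro R0. apply window_null; auto.
    + intros x Hx. destruct (INR_archimed 1 (vnorm (fun j => zc p x j)) ltac:(lra)) as [k Hk].
      exists k. split; auto. intro j. pose proof (norm_ge_coord (fun j => zc p x j) j). simpl in *. lra.
Qed.
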